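(* Consider Janus Quicksort (JQuick), as described in the context, run on $n$ elements with distinct keys distributed over $p$ processes with $n/p$ elements each. With probability $1-O(p^{-6})$, JQuick executes only $O(\log p)$ distributed levels of recursion (equivalently, it executes more than $O(\log p)$ distributed levels of recursion with probability $O(p^{-6})$).
   Context: Janus Quicksort (JQuick) is a recursive distributed-memory sorting algorithm. The input is $n$ elements with pairwise distinct keys, distributed over $p$ processes numbered $0,\dots,p-1$ with exactly $n/p$ elements per process ($n$ a multiple of $p$). The algorithm maintains tasks; a task is a contiguous range of processes together with a contiguous range of the global sorted order of elements that these processes jointly hold, every process holding exactly $n/p$ elements in total, summed over all tasks it belongs to. A process may belong to two tasks at once (a ''janus process''), and it then processes both simultaneously. One distributed level of recursion on a task performs four steps: (1) pivot selection: an element of the task chosen uniformly at random is broadcast to all processes of the task; (2) partitioning: each process splits its elements of the task into small elements (smaller than the pivot) and large elements (at least the pivot); (3) data assignment: using prefix sums and broadcasts, the small elements are assigned to a left group consisting of an initial segment of the task's processes and the large elements to a right group consisting of a final segment, such that every process again holds exactly $n/p$ elements in total; the two groups share at most one process (a janus process); (4) data exchange: elements are sent to their assigned processes. Then the left group recursively sorts the small elements and the right group the large elements. A task covering only one or two processes is a base case; base cases are not split further but sorted in a second phase. The number of distributed levels of recursion is the depth of this recursion (excluding the base-case phase). *)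

(* Defs.v *)
From mathcomp Require Import all_boot all_order all_algebra.
Set Implicit Arguments. Unset Strict Implicit. Unset Printing Implicit Defensive.
Import Order.TTheory GRing.Theory Num.Theory.
Local Open Scope ring_scope.

Definition dist (A : Type) := seq (rat * A).
Definition dret (A : Type) (a : A) : dist A := [:: (1, a)].
Definition dbind (A B : Type) (m : dist A) (f : A -> dist B) : dist B :=
  flatten [seq [seq (w.1 * v.1, v.2) | v <- f w.2] | w <- m].
Definition dunif (s e : nat) : dist nat :=
  [seq (((e - s)%N)%:R^-1, r) | r <- iota s (e - s)].
Definition dprob (A : Type) (m : dist A) (P : pred A) : rat :=
  \sum_(w <- m | P w.2) w.1.

(* ---------- Model of JQuick ------------------------------------------------
   Keys are distinct, so elements are identified with their global rank
   0..n-1.  Process i owns the n/p global slots [i*k, (i+1)*k), k = n/p.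
   A task is a contiguous slot range [s, e): its elements are exactly those
   of ranks s..e-1, and its processes are the processes whose slot block meets
   [s, e).  Choosing the pivot of rank r (uniformly in [s, e)), the small
   elements (ranks s..r-1) are assigned to the slots [s, r) (left group) and
   the large ones (ranks r..e-1) to the slots [r, e) (right group). *)

Definition nprocs (k s e : nat) : nat :=
  if (e <= s)%N then 0%N else ((e.-1 %/ k - s %/ k).+1)%N.

Definition is_base (k s e : nat) : bool := (nprocs k s e <= 2)%N.

(* distribution of min(depth, d) of the distributed recursion started on task
   [s, e), where depth = number of distributed levels (base cases excluded);
   the two subtasks use independent random pivots. *)
Fixpoint levels (k d s e : nat) : dist nat :=
  match d with
  | 0 => dret 0%N
  | d'.+1 =>
    if is_base k s e then dret 0%N
    else dbind (dunif s e) (fun r =>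
         dbind (levels k d' s r) (fun a =>
         dbind (levels k d' r e) (fun b => dret (maxn a b).+1)))
  end.

(* probability that JQuick on n elements over p processes executes more than
   D distributed levels of recursion (depends only on the first D+1 levels) *)
Definition jquick_exceeds (n p D : nat) : rat :=
  dprob (levels (n %/ p) D.+1 0 n) (fun t => (D < t)%N).

(* Main.v *)
Require Import Defs.
From mathcomp Require Import all_boot all_order all_algebra.
From mathcomp Require Import zify ring lra.
Import Order.TTheory GRing.Theory Num.Theory.
Local Open Scope ring_scope.

Lemma dprobE (A : Type) (m : dist A) P :
  dprob m P = \sum_(w <- m) w.1 * (P w.2)%:R.
Proof.
rewrite /dprob big_mkcond; apply: eq_bigr => w _.
by case: (P w.2); rewrite ?mulr1 ?mulr0.
Qed.

Lemma dprob_ret (A : Type) (a : A) P : dprob (dret a) P = (P a)%:R.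
Proof. by rewrite dprobE /dret big_cons big_nil addr0 mul1r. Qed.

Lemma dprob_bind (A B : Type) (m : dist A) (f : A -> dist B) P :
  dprob (dbind m f) P = \sum_(w <- m) w.1 * dprob (f w.2) P.
Proof.
rewrite /dprob /dbind big_flatten /= big_map; apply: eq_bigr => w _.
by rewrite big_map /= mulr_sumr.
Qed.

Lemma dprob_unif s e P :
  dprob (dunif s e) P = \sum_(s <= r < e) ((e - s)%N)%:R^-1 * (P r)%:R.
Proof. by rewrite dprobE /dunif big_map. Qed.

Definition good (m : dist nat) :=
  all (fun w => 0 <= w.1) m && (dprob m predT <= 1).

Lemma dprob_ge0 (m : dist nat) P :
  all (fun w => 0 <= w.1) m -> 0 <= dprob m P.
Proof.
move=> /allP H; rewrite /dprob big_seq_cond; apply: sumr_ge0 => w /andP[wm _]; exact: H.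
Qed.

Lemma dprob_le1 (m : dist nat) P : good m -> dprob m P <= 1.
Proof.
case/andP=> /allP H H1; apply: le_trans H1.
rewrite !dprobE big_seq [X in _ <= X]big_seq; apply: ler_sum => w wm.
apply: ler_wpM2l; first exact: H.
by case: (P w.2).
Qed.

Lemma good_ret (a : nat) : good (dret a).
Proof. rewrite /good /= dprob_ret /=; exact: lexx. Qed.

Lemma good_bind (m : dist nat) (f : nat -> dist nat) :
  good m -> (forall a, good (f a)) -> good (dbind m f).
Proof.
move=> Hm Hf; apply/andP; split.
  apply/allP => v /flattenP [l /mapP [w wm ->]] /mapP [u uf ->] /=.
  apply: mulr_ge0.
    by case/andP: Hm => /allP /(_ w wm).
  by case/andP: (Hf w.2) => /allP /(_ u uf).
have H1 : dprob m predT <= 1 by case/andP: Hm.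
rewrite dprob_bind; apply: le_trans H1.
rewrite dprobE !big_seq; apply: ler_sum => w wm /=; rewrite mulr1.
rewrite -[X in _ <= X]mulr1; apply: ler_wpM2l.
  by case/andP: Hm => /allP /(_ w wm).
exact: dprob_le1.
Qed.

Lemma good_unif s e : good (dunif s e).
Proof.
apply/andP; split.
  by apply/allP => w /mapP [r _ ->] /=; rewrite invr_ge0 ler0n.
rewrite dprob_unif.
under eq_bigr do rewrite /= mulr1.
rewrite sumr_const_nat.
case: (e - s)%N => [|m]; first by rewrite mulr0n ler01.
by rewrite -[X in X <= _]mulr_natr mulVf ?pnatr_eq0.
Qed.
Lemma good_levels k d s e : good (levels k d s e).
Proof.
elim: d s e => [|d IH] s e /=; first exact: good_ret.
case: ifP => _; first exact: good_ret.
apply: good_bind => [|r]; first exact: good_unif.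
apply: good_bind => [|a]; first exact: IH.
apply: good_bind => [|b]; first exact: IH.
exact: good_ret.
Qed.

Lemma mass_le1 (m : dist nat) : good m -> \sum_(w <- m) w.1 <= 1.
Proof.
case/andP=> _; rewrite dprobE.
by under eq_bigr do rewrite /= mulr1.
Qed.

Lemma union (m1 m2 : dist nat) d : good m1 -> good m2 ->
  dprob (dbind m1 (fun a => dbind m2 (fun b => dret (maxn a b).+1)))
        (fun t => (d < t)%N)
  <= dprob m1 (fun a => (d <= a)%N) + dprob m2 (fun b => (d <= b)%N).
Proof.
move=> g1 g2.
have inner : forall a, dprob (dbind m2 (fun b => dret (maxn a b).+1))
        (fun t => (d < t)%N) <= ((d <= a)%N)%:R + dprob m2 (fun b => (d <= b)%N).
  move=> a; rewrite dprob_bind; under eq_bigr do rewrite dprob_ret.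
  case: (leqP d a) => H.
    apply: (@le_trans _ _ (\sum_(v <- m2) v.1)).
      rewrite big_seq [X in _ <= X]big_seq; apply: ler_sum => v vm.
      rewrite -[X in _ <= X]mulr1; apply: ler_wpM2l.
        by case/andP: g2 => /allP /(_ v vm).
      by case: (_ < _)%N.
    have -> : ((true : nat)%:R : rat) = 1 by []. rewrite -[X in X <= _]addr0; apply: lerD; first exact: mass_le1.
    by case/andP: g2 => g2' _; apply: dprob_ge0.
  rewrite add0r dprobE le_eqVlt; apply/orP; left; apply/eqP.
  apply: eq_bigr => v _; congr (_ * _%:R).
  by rewrite ltnS leq_max leqNgt H.
rewrite dprob_bind.
apply: (@le_trans _ _ (\sum_(w <- m1) w.1 * (((d <= w.2)%N)%:R + dprob m2 (fun b => (d <= b)%N)))).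
  rewrite big_seq [X in _ <= X]big_seq; apply: ler_sum => w wm.
  apply: ler_wpM2l; last exact: inner.
  by case/andP: g1 => /allP /(_ w wm).
under eq_bigr do rewrite mulrDr.
rewrite big_split /= -dprobE -mulr_suml lerD2l.
rewrite -[X in _ <= X]mul1r; apply: ler_wpM2r; last exact: mass_le1.
by case/andP: g2 => g2' _; apply: dprob_ge0.
Qed.
Lemma sq_sum m : (6 * \sum_(0 <= j < m) j ^ 2 + 3 * m ^ 2 = 2 * m ^ 3 + m)%N.
Proof.
elim: m => [|m IH]; first by rewrite big_geq.
rewrite big_nat_recr //=. nia.
Qed.

Lemma key_nat s e : (2 <= e - s)%N ->
  (4 * \sum_(s <= r < e) ((r - s) ^ 2 + (e - r) ^ 2) <= 3 * (e - s) ^ 3)%N.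
Proof.
move=> H.
have [m Em] : exists m, e = (s + m)%N by exists (e - s)%N; lia.
subst e; rewrite addKn in H *.
rewrite -{1}(add0n s) big_addn addKn.
have E : (\sum_(0 <= i < m) ((i + s - s) ^ 2 + (s + m - (i + s)) ^ 2)
   = \sum_(0 <= i < m) i ^ 2 + \sum_(0 <= i < m) (m - i) ^ 2)%N.
  rewrite -big_split /=; apply: eq_big_nat => i /andP[_ lim].
  congr (_ ^ 2 + _ ^ 2)%N; lia.
rewrite E.
have E2 : (\sum_(0 <= i < m) (m - i) ^ 2 = \sum_(0 <= i < m) i ^ 2 + m ^ 2)%N.
  rewrite big_nat_rev /= -big_nat_recr //= big_nat_recl //= exp0n // add0n.
  apply: eq_big_nat => i /andP[_ lim]; congr (_ ^ 2)%N; lia.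
rewrite E2; have := sq_sum m.
move: (\sum_(0 <= j < m) j ^ 2)%N => U.
have h4 : (4 * m <= m ^ 3)%N.
  have : (4 <= m * m)%N by exact: (leq_mul H H).
  rewrite (_ : m ^ 3 = m * m * m)%N; last by rewrite !expnS expn0 muln1 mulnA.
  nia.
nia.
Qed.
Lemma nonbase_size k s e : (0 < k)%N -> ~~ is_base k s e -> (k.+1 < e - s)%N.
Proof.
move=> k0; rewrite /is_base /nprocs.
case: (leqP e s) => [_|Hse] //= H.
have H2 : ((s %/ k).+2 <= e.-1 %/ k)%N by lia.
have H3 : ((s %/ k).+2 * k <= e.-1 %/ k * k)%N by rewrite leq_mul2r H2 orbT.
have := divn_eq s k; have := divn_eq e.-1 k.
have := ltn_pmod s k0; have := ltn_pmod e.-1 k0.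
move: H3; rewrite mulSn mulSn.
move: (s %/ k * k)%N (e.-1 %/ k * k)%N (s %% k)%N (e.-1 %% k)%N => a b c d.
lia.
Qed.

Definition Q k d s e := dprob (levels k d s e) (fun t => (d <= t)%N).

Lemma Q_base k d s e : is_base k s e -> Q k d.+1 s e = 0.
Proof. by move=> H; rewrite /Q /= H dprob_ret. Qed.

Lemma Q_ge0 k d s e : 0 <= Q k d s e.
Proof. by case/andP: (good_levels k d s e) => g _; apply: dprob_ge0. Qed.

Lemma Q_le1 k d s e : Q k d s e <= 1.
Proof. exact: dprob_le1 (good_levels k d s e). Qed.

Lemma Q_step k d s e : ~~ is_base k s e ->
  Q k d.+1 s e <= \sum_(s <= r < e) ((e - s)%N)%:R^-1 * (Q k d s r + Q k d r e).
Proof.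
move=> H; rewrite /Q /= (negbTE H) dprob_bind /dunif big_map.
apply: ler_sum => r _ /=.
apply: ler_wpM2l; first by rewrite invr_ge0 ler0n.
exact: union (good_levels _ _ _ _) (good_levels _ _ _ _).
Qed.
Lemma avg_bound s e (N : nat) : (0 < e - s)%N ->
  (4 * N <= 3 * (e - s) ^ 3)%N ->
  ((e - s)%N)%:R^-1 * N%:R <= 3 / 4 * ((e - s)%N)%:R ^+ 2 :> rat.
Proof.
move=> m0 h.
have h' : (4 * N)%N%:R <= (3 * (e - s) ^ 3)%N%:R :> rat by rewrite ler_nat.
rewrite !natrM in h'.
move: h' m0; move: (e - s)%N => m h' m0.
have mp : 0 < m%:R :> rat by rewrite ltr0n.
rewrite mulrC ler_pdivrMr //.
have -> : 3 / 4 * m%:R ^+ 2 * m%:R = 3 / 4 * (m%:R * (m%:R * m%:R)) :> rat.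
  by ring.
move: h'; move: (m%:R * (m%:R * m%:R) : rat) (N%:R : rat) => y x.
lra.
Qed.

Lemma Q_bound k d s e : (0 < k)%N ->
  Q k d.+1 s e <= (3 / 4) ^+ d / k%:R ^+ 2 * ((e - s)%N)%:R ^+ 2.
Proof.
move=> k0.
have A0 : forall d, 0 <= (3 / 4 : rat) ^+ d / k%:R ^+ 2.
  by move=> d'; apply: divr_ge0; [apply: exprn_ge0 | apply: exprn_ge0]; lra || rewrite ler0n.
elim: d s e => [|d IH] s e.
  case B: (is_base k s e).
    by rewrite Q_base // mulr_ge0 ?exprn_ge0 ?ler0n ?A0.
  apply: le_trans (Q_le1 _ _ _ _) _.
  have hk := nonbase_size k s e k0 (negbT B).
  rewrite expr0 mul1r mulrC ler_pdivlMr ?exprn_gt0 ?ltr0n // mul1r.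
  rewrite -!natrX ler_nat leq_exp2r //; lia.
case B: (is_base k s e).
  by rewrite Q_base // mulr_ge0 ?exprn_ge0 ?ler0n ?A0.
have hk := nonbase_size k s e k0 (negbT B).
apply: le_trans (Q_step _ _ _ _ (negbT B)) _.
apply: (@le_trans _ _ (\sum_(s <= r < e) ((e - s)%N)%:R^-1 *
   ((3 / 4) ^+ d / k%:R ^+ 2 * ((r - s)%N)%:R ^+ 2 +
    (3 / 4) ^+ d / k%:R ^+ 2 * ((e - r)%N)%:R ^+ 2))).
  apply: ler_sum => r _; apply: ler_wpM2l; first by rewrite invr_ge0 ler0n.
  by apply: lerD; apply: IH.
have -> : \sum_(s <= r < e) ((e - s)%N)%:R^-1 *
   ((3 / 4) ^+ d / k%:R ^+ 2 * ((r - s)%N)%:R ^+ 2 +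
    (3 / 4) ^+ d / k%:R ^+ 2 * ((e - r)%N)%:R ^+ 2)
  = (3 / 4) ^+ d / k%:R ^+ 2 * (((e - s)%N)%:R^-1 *
      (\sum_(s <= r < e) ((r - s) ^ 2 + (e - r) ^ 2))%N%:R) :> rat.
  rewrite natr_sum !mulr_sumr; apply: eq_bigr => r _.
  rewrite natrD !natrX; ring.
have -> : (3 / 4) ^+ d.+1 / k%:R ^+ 2 * ((e - s)%N)%:R ^+ 2
   = (3 / 4) ^+ d / k%:R ^+ 2 * (3 / 4 * ((e - s)%N)%:R ^+ 2) :> rat.
  by rewrite exprS; ring.
apply: ler_wpM2l; first exact: A0.
apply: avg_bound; first lia.
apply: key_nat; lia.
Qed.
Lemma base_k0 s e : is_base 0 s e.
Proof. by rewrite /is_base /nprocs !divn0; case: ifP. Qed.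

Lemma abs_ineq (a b : rat) t : 0 <= a -> 0 <= b -> a * b <= 1 ->
  a ^+ t * (b * b ^+ t) <= b.
Proof.
move=> a0 b0 ab.
rewrite mulrCA -[X in _ <= X]mulr1; apply: ler_wpM2l => //.
rewrite -exprMn; apply: exprn_ile1 => //; exact: mulr_ge0.
Qed.

Lemma cube_bound : (3 / 4 : rat) ^+ 3 * 2%:R <= 1.
Proof.
have : forall q : rat, q = 3 / 4 -> q ^+ 3 * 2%:R <= 1.
  move=> q Hq; rewrite !exprS expr0 mulr1 Hq; lra.
by apply.
Qed.

Theorem lemma2 :
  exists (C : nat) (c : rat) (p0 : nat),
    forall p n : nat, (p0 <= p)%N -> (p %| n)%N ->
      jquick_exceeds n p (C * trunc_log 2 p)%N <= c / (p%:R ^+ 6).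
Proof.
exists 24%N, (2%:R ^+ 8), 1%N => p n p1 pn.
have pp : 0 < p%:R :> rat by rewrite ltr0n.
have rhs0 : 0 <= 2%:R ^+ 8 / p%:R ^+ 6 :> rat.
  by apply: divr_ge0; apply: exprn_ge0; [rewrite ler0n | apply: ltW].
set t := trunc_log 2 p.
have hp : (p < 2 ^ t.+1)%N := trunc_log_ltn p (isT : (1 < 2)%N).
clearbody t.
change (Q (n %/ p) (24 * t)%N.+1 0 n <= 2%:R ^+ 8 / p%:R ^+ 6).
case: (posnP (n %/ p)) => [k0|kp].
  by rewrite k0 Q_base ?base_k0.
apply: le_trans (Q_bound _ _ _ _ kp) _.
rewrite subn0.
have En : n%:R = (n %/ p)%:R * p%:R :> rat by rewrite -natrM divnK.
rewrite En.
have kR : (n %/ p)%:R != 0 :> rat by rewrite pnatr_eq0 -lt0n.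
have -> : (3 / 4) ^+ (24 * t) / (n %/ p)%:R ^+ 2 * ((n %/ p)%:R * p%:R) ^+ 2
   = (3 / 4) ^+ (24 * t) * p%:R ^+ 2 :> rat.
  by field.
rewrite ler_pdivlMr ?exprn_gt0 //.
have hp8 : (p ^ 8 <= 2 ^ (8 * t.+1))%N.
  by rewrite mulnC expnM leq_exp2r // ltnW.
have hp8R : p%:R ^+ 8 <= 2%:R ^+ 8 * (2%:R ^+ 8) ^+ t :> rat.
  have := hp8; rewrite -(ler_nat rat) !natrX.
  by rewrite exprM [_ ^+ t.+1]exprS.
rewrite -mulrA -exprD.
apply: (@le_trans _ _ ((3 / 4) ^+ (24 * t) * (2%:R ^+ 8 * (2%:R ^+ 8) ^+ t))).
  apply: ler_wpM2l; last exact: hp8R.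
  apply: exprn_ge0; lra.
have q0 : 0 <= (3 / 4 : rat) by lra.
have w0 : 0 <= (2%:R : rat) by rewrite ler0n.
have h1 : (3 / 4 : rat) ^+ 3 * 2%:R <= 1 by apply: cube_bound.
move: (3 / 4 : rat) q0 h1 => q q0 h1.
move: (2%:R : rat) w0 h1 => w w0 h1.
have E : (24 * t = 3 * 8 * t)%N by [].
rewrite E (exprM q (3 * 8)%N t) (exprM q 3%N 8%N).
apply: abs_ineq.
- by apply: exprn_ge0; apply: exprn_ge0.
- by apply: exprn_ge0.
rewrite -exprMn; apply: exprn_ile1 => //.
by apply: mulr_ge0 => //; apply: exprn_ge0.
Qed.
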